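(* Fix $d\in(0,\psi_{\max})$. For $\alpha\in(0,1-d/\varphi_{\max})$ define $$v_{\rm in}^*(\alpha,d)=\alpha\beta\gamma\left(s_{\rm in}-\varphi^{-1}\!\left(\frac{d}{1-\alpha}\right)\right),\qquad f_0^*(\alpha,d)=\frac{d\,\big(v_{\rm in}^*(\alpha,d)-\psi^{-1}(d)\big)}{\mu^{-1}(d)}.$$ Then $\alpha\mapsto f_0^*(\alpha,d)$ is strictly concave on $(0,1-d/\varphi_{\max})$.
   Context: All parameters $s_{\rm in},\gamma,\beta,\varphi_{\max},k_s,\rho_{\max},k_v,q_{\min},\mu_{\max}$ are strictly positive. $\varphi(s)=\frac{\varphi_{\max}s}{k_s+s}$, $\rho(v)=\frac{\rho_{\max}v}{k_v+v}$ on $[0,\infty)$, $\mu(q)=\mu_{\max}(1-q_{\min}/q)$ on $[q_{\min},\infty)$, with inverses $\varphi^{-1}:[0,\varphi_{\max})\to[0,\infty)$, $\mu^{-1}:[0,\mu_{\max})\to[q_{\min},\infty)$, $\rho^{-1}:[0,\rho_{\max})\to[0,\infty)$. $\psi_{\max}=\frac{\mu_{\max}\rho_{\max}}{\rho_{\max}+q_{\min}\mu_{\max}}$ and $\psi^{-1}(y)=\rho^{-1}(y\,\mu^{-1}(y))$ for $y\in[0,\psi_{\max})$. The quantity $f_0^*(\alpha,d)$ is the algal harvest rate $d\cdot c^*$ at the coexistence equilibrium of the consortium model under constant controls $(\alpha,d)$. *)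

(* Defs.v *)
From Stdlib Require Import Reals Lra.
Open Scope R_scope.

Definition phi (phimax ks s : R) : R := phimax * s / (ks + s).
Definition rho (rhomax kv v : R) : R := rhomax * v / (kv + v).
Definition mu (mumax qmin q : R) : R := mumax * (1 - qmin / q).

(* Explicit inverses (on [0,phimax), [0,rhomax), [0,mumax) respectively). *)
Definition phi_inv (phimax ks y : R) : R := ks * y / (phimax - y).
Definition rho_inv (rhomax kv y : R) : R := kv * y / (rhomax - y).
Definition mu_inv (mumax qmin y : R) : R := mumax * qmin / (mumax - y).

Definition psi_max (mumax rhomax qmin : R) : R :=
  mumax * rhomax / (rhomax + qmin * mumax).

Definition psi_inv (mumax rhomax kv qmin y : R) : R :=
  rho_inv rhomax kv (y * mu_inv mumax qmin y).

Definition v_in_star (sin gamma beta phimax ks alpha d : R) : R :=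
  alpha * beta * gamma * (sin - phi_inv phimax ks (d / (1 - alpha))).

Definition f0_star (sin gamma beta phimax ks rhomax kv qmin mumax alpha d : R) : R :=
  d * (v_in_star sin gamma beta phimax ks alpha d
       - psi_inv mumax rhomax kv qmin d) / mu_inv mumax qmin d.

Definition strictly_concave_on (f : R -> R) (a b : R) : Prop :=
  forall x y t, a < x < b -> a < y < b -> x <> y -> 0 < t < 1 ->
    t * f x + (1 - t) * f y < f (t * x + (1 - t) * y).

(* Main.v *)
Require Import Defs.
From Stdlib Require Import Reals Lra Psatz.
Open Scope R_scope.

Lemma Rlt_div_l (a b c : R) : 0 < b -> (a / b < c <-> a < c * b).
Proof.
  intros Hb; split; intro H.
  - assert (a = a / b * b) by (field; lra). nra.
  - assert (a / b = a * / b) by reflexivity. pose proof (Rinv_0_lt_compat b Hb).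
    assert (c = c * b * / b) by (field; lra). nra.
Qed.

Lemma inv_conv (X Y t : R) : 0 < X -> 0 < Y -> X <> Y -> 0 < t < 1 ->
  1 / (t * X + (1 - t) * Y) < t / X + (1 - t) / Y.
Proof.
  intros HX HY HXY Ht.
  assert (HZ : 0 < t * X + (1 - t) * Y) by nra.
  assert (Hd : t / X + (1 - t) / Y - 1 / (t * X + (1 - t) * Y)
    = t * (1 - t) * (X - Y) ^ 2 / (X * Y * (t * X + (1 - t) * Y))).
  { field; lra. }
  assert (Hp : 0 < t * (1 - t) * (X - Y) ^ 2 / (X * Y * (t * X + (1 - t) * Y))).
  { apply Rdiv_lt_0_compat.
    - apply Rmult_lt_0_compat; [nra|]. assert (X - Y <> 0) by lra.
      replace ((X - Y) ^ 2) with ((X - Y) * (X - Y)) by ring. nra.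
    - apply Rmult_lt_0_compat; [nra|lra]. }
  lra.
Qed.

Theorem lemma1 (sin gamma beta phimax ks rhomax kv qmin mumax d : R) :
  0 < sin -> 0 < gamma -> 0 < beta -> 0 < phimax -> 0 < ks ->
  0 < rhomax -> 0 < kv -> 0 < qmin -> 0 < mumax ->
  0 < d < psi_max mumax rhomax qmin ->
  strictly_concave_on
    (fun alpha => f0_star sin gamma beta phimax ks rhomax kv qmin mumax alpha d)
    0 (1 - d / phimax).
Proof.
  intros Hs Hg Hb HP Hks Hr Hkv Hq Hm [Hd0 Hd1].
  assert (Hdm : d < mumax).
  { unfold psi_max in Hd1.
    assert (mumax * rhomax / (rhomax + qmin * mumax) < mumax); [|lra].
    apply Rlt_div_l; [nra|]. assert (0 < mumax * (qmin * mumax)) by (apply Rmult_lt_0_compat; nra). nra. }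
  unfold strictly_concave_on; intros x y t Hx Hy Hxy Ht.
  assert (Hpd : d < phimax).
  { assert (0 < 1 - d / phimax) by lra.
    assert (d / phimax < 1) by lra. apply (proj1 (Rlt_div_l _ _ _ HP)) in H0; lra. }
  set (mi := mu_inv mumax qmin d).
  assert (Hmi : 0 < mi).
  { unfold mi, mu_inv. apply Rdiv_lt_0_compat; nra. }
  set (K := psi_inv mumax rhomax kv qmin d).
  set (C := d / mi).
  assert (HC : 0 < C) by (apply Rdiv_lt_0_compat; lra).
  set (N := C * beta * gamma * ks * d * (phimax - d) / phimax).
  set (L := C * beta * gamma * sin).
  set (M := C * (beta * gamma * ks * d / phimax - K)).
  assert (Hrep : forall a, 0 < a < 1 - d / phimax ->
     f0_star sin gamma beta phimax ks rhomax kv qmin mumax a d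
     = L * a + M - N / (phimax - d - phimax * a)).
  { intros a [Ha0 Ha1].
    assert (Hpa : d < phimax * (1 - a)).
    { assert (d / phimax < 1 - a) by lra.
      apply (proj1 (Rlt_div_l _ _ _ HP)) in H; lra. }
    unfold f0_star, v_in_star, phi_inv. fold K. fold mi.
    unfold L, M, N, C.
    assert (1 - a <> 0) by nra.
    assert (phimax - d / (1 - a) <> 0).
    { assert (d / (1 - a) < phimax). { apply Rlt_div_l; [nra|]. lra. } lra. }
    field; repeat split; try lra. }
  assert (HN : 0 < N).
  { unfold N. apply Rdiv_lt_0_compat; [|lra].
    assert (0 < phimax - d) by lra. assert (0 < C * beta) by nra. assert (0 < C*beta*gamma) by nra. assert (0 < C*beta*gamma*ks) by nra. assert (0 < C*beta*gamma*ks*d) by nra. nra. }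
  rewrite !Hrep; [| |exact Hy|exact Hx].
  2:{ split; nra. }
  set (X := phimax - d - phimax * x). set (Y := phimax - d - phimax * y).
  assert (HX : 0 < X).
  { unfold X. destruct Hx as [_ h]. assert (d / phimax < 1 - x) by lra.
    apply (proj1 (Rlt_div_l _ _ _ HP)) in H; lra. }
  assert (HY : 0 < Y).
  { unfold Y. destruct Hy as [_ h]. assert (d / phimax < 1 - y) by lra.
    apply (proj1 (Rlt_div_l _ _ _ HP)) in H; lra. }
  assert (HXY : X <> Y) by (unfold X, Y; intro; apply Hxy; nra).
  replace (phimax - d - phimax * (t * x + (1 - t) * y)) with (t * X + (1 - t) * Y)
    by (unfold X, Y; ring).
  pose proof (inv_conv X Y t HX HY HXY Ht) as Hc.
  assert (HZ : 0 < t * X + (1 - t) * Y) by nra.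
  replace (N / (t * X + (1 - t) * Y)) with (N * (1 / (t * X + (1 - t) * Y))) by (field; lra).
  replace (t * (L * x + M - N / X) + (1 - t) * (L * y + M - N / Y))
    with (L * (t * x + (1 - t) * y) + M - N * (t / X + (1 - t) / Y)) by (field; lra).
  nra.
Qed.
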